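(* Let $[\underline R,\overline R]$ be a closed interval of a rich single-crossing domain and $\mu$ a non-trivial continuous probability measure on its Borel $\sigma$-algebra. Let $F^c=(t^c,q^c):[\underline R,\overline R]\to\mathbb{Z}$ be strategy-proof and individually rational with countable, closed range having finitely many limit points, and suppose $E(F)<E(F^c)$ for every strategy-proof, individually rational mechanism $F$ with finite range, where $E(F)=\int t\,d\mu$. Then for every $\epsilon>0$ there is a strategy-proof, individually rational mechanism $F^\epsilon$ with finite range such that $E(F^c)-E(F^\epsilon)\le\epsilon$. Further, if an optimal finite-range mechanism $F^*$ exists (maximizing $E$ among strategy-proof, individually rational mechanisms with finite range), then $E(F^c)\le E(F^* )$.
   Context: $\mathbb{Z}=[0,\infty)\times[0,1]$; $(t',q')<(t'',q'')$ means $t'<t''$, $q'<q''$; $x\le y$ means $x=y$ or $x<y$; $\square(z)=\{x:x\le z\}$. A classical preference is a complete transitive relation $R$ on $\mathbb{Z}$ strictly decreasing in $t$ for fixed $q$, strictly increasing in $q$ for fixed $t$, with closed upper and lower contour sets. Distinct classical preferences satisfy single-crossing if any indifference set of one meets any indifference set of the other in at most one point. A rich single-crossing domain is a set of pairwise single-crossing classical preferences such that for all $x'<x''$ some member is indifferent between them. For distinct members, $R'\prec R''$ means $\square(z)\cap\{x:xR''z\}\subseteq\square(z)\cap\{x:xR'z\}$ for all $z$; $\prec$ is a linear order; $[\underline R,\overline R]$ carries the subspace order topology and Borel $\sigma$-algebra. $\mu$ is non-trivial if every interval with more than one element has positive measure; continuous if for all Borel $A$ with $\mu(A)>0$ and $0<c<\mu(A)$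 there is Borel $B\subseteq A$ with $\mu(B)=c$. A mechanism $F$ is strategy-proof if $F(R')R'F(R'')$ for all $R',R''$, individually rational if $F(R)R(0,0)$ for all $R$. *)

(* Defs.v *)
From HB Require Import structures.
From mathcomp Require Import all_boot all_order all_algebra.
From mathcomp Require Import all_classical all_reals all_analysis.
Set Implicit Arguments.
Unset Strict Implicit.
Unset Printing Implicit Defensive.
Import Order.TTheory GRing.Theory Num.Theory.
Import numFieldNormedType.Exports.
Local Open Scope classical_set_scope.
Local Open Scope ring_scope.

Definition Zs {R : realType} : set (R * R) :=
  [set x | 0 <= x.1 /\ 0 <= x.2 <= 1].

Definition ltZ {R : realType} (x y : R * R) : Prop := x.1 < y.1 /\ x.2 < y.2.
Definition leZ {R : realType} (x y : R * R) : Prop := x = y \/ ltZ x y.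
Definition box {R : realType} (z : R * R) : set (R * R) :=
  [set x | Zs x /\ leZ x z].

(* A preference is a binary relation; "x R y" means x is weakly preferred to y.
   Being a relation ON Z is encoded by requiring it to hold only between points of Z. *)
Definition pref (R : realType) := R * R -> R * R -> Prop.


Definition indiff {R : realType} (P : pref R) (x y : R * R) : Prop :=
  P x y /\ P y x.
Definition strict {R : realType} (P : pref R) (x y : R * R) : Prop :=
  P x y /\ ~ P y x.

Definition classical_pref {R : realType} (P : pref R) : Prop :=
     (forall x y, P x y -> Zs x /\ Zs y) /\
      (forall x y, Zs x -> Zs y -> P x y \/ P y x) /\
      (forall x y z, P x y -> P y z -> P x z) /\
      (forall t1 t2 q, Zs (pair t1 q) -> Zs (pair t2 q) -> t1 < t2 ->
         strict P (pair t1 q) (pair t2 q)) /\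
      (forall t q1 q2, Zs (pair t q1) -> Zs (pair t q2) -> q1 < q2 ->
         strict P (pair t q2) (pair t q1)) /\
      (forall z, Zs z -> closed [set x | P x z]) /\
      (forall z, Zs z -> closed [set x | P z x]).

Definition single_crossing {R : realType} (P1 P2 : pref R) : Prop :=
  forall a b x y, Zs a -> Zs b ->
    indiff P1 x a -> indiff P1 y a -> indiff P2 x b -> indiff P2 y b -> x = y.

Definition rich_single_crossing {R : realType} (D : set (pref R)) : Prop :=
  [/\ (forall P, D P -> classical_pref P),
      (forall P1 P2, D P1 -> D P2 -> P1 <> P2 -> single_crossing P1 P2) &
      (forall x y, Zs x -> Zs y -> ltZ x y -> exists2 P, D P & indiff P x y)].

Definition precP {R : realType} (P1 P2 : pref R) : Prop :=
  P1 <> P2 /\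
  forall z, box z `&` [set x | P2 x z] `<=` box z `&` [set x | P1 x z].
Definition preceqP {R : realType} (P1 P2 : pref R) : Prop :=
  P1 = P2 \/ precP P1 P2.

Definition interval {R : realType} (D : set (pref R)) (Rl Rh : pref R) :
  set (pref R) := [set P | D P /\ preceqP Rl P /\ preceqP P Rh].

Definition order_basic {R : realType} (D : set (pref R)) (B : set (pref R)) : Prop :=
  B = D \/
  (exists a, D a /\ B = [set P | D P /\ precP a P]) \/
  (exists b, D b /\ B = [set P | D P /\ precP P b]) \/
  (exists a b, D a /\ D b /\ B = [set P | D P /\ precP a P /\ precP P b]).

Definition order_open {R : realType} (D : set (pref R)) (U : set (pref R)) : Prop :=
  U `<=` D /\
  forall P, U P -> exists B, [/\ order_basic D B, B P & B `<=` U].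

Definition interval_open {R : realType} (D : set (pref R)) (Rl Rh : pref R) :
  set (set (pref R)) :=
  [set U `&` interval D Rl Rh | U in order_open D].

(* The measurable space: sets of preferences with the sigma-algebra generated by the
   open subsets of [Rl, Rh]; its trace on [Rl, Rh] is the Borel sigma-algebra of
   [Rl, Rh]. *)
Definition borelI (R : realType) (D : set (pref R)) (Rl Rh : pref R) :=
  g_sigma_algebraType (interval_open D Rl Rh).

Definition sub_interval {R : realType} (D : set (pref R)) (Rl Rh : pref R)
  (S : set (pref R)) : Prop :=
  exists c d, [/\ interval D Rl Rh c, interval D Rl Rh d &
    (S = [set P | interval D Rl Rh P /\ preceqP c P /\ preceqP P d] \/
     S = [set P | interval D Rl Rh P /\ precP c P /\ precP P d] \/
     S = [set P | interval D Rl Rh P /\ preceqP c P /\ precP P d] \/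
     S = [set P | interval D Rl Rh P /\ precP c P /\ preceqP P d])].

Section Measures.
Context {R : realType} (D : set (pref R)) (Rl Rh : pref R).
Local Notation I := (interval D Rl Rh).

Definition probability_on (mu : {measure set (borelI D Rl Rh) -> \bar R}) : Prop :=
  mu setT = 1%E /\ mu I = 1%E.

Definition nontrivial (mu : {measure set (borelI D Rl Rh) -> \bar R}) : Prop :=
  forall S, sub_interval D Rl Rh S -> (exists x y, [/\ S x, S y & x <> y]) ->
    (0 < mu S)%E.

Definition continuous_measure (mu : {measure set (borelI D Rl Rh) -> \bar R}) : Prop :=
  forall A : set (borelI D Rl Rh), measurable A -> A `<=` I -> (0 < mu A)%E ->
    forall c : R, 0 < c -> (c%:E < mu A)%E ->
      exists B : set (borelI D Rl Rh), [/\ measurable B, B `<=` A & mu B = c%:E].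

Definition mechanism (F : pref R -> R * R) : Prop := forall P, I P -> Zs (F P).

Definition strategy_proof (F : pref R -> R * R) : Prop :=
  forall P1 P2, I P1 -> I P2 -> P1 (F P1) (F P2).

Definition individually_rational (F : pref R -> R * R) : Prop :=
  forall P, I P -> P (F P) (pair 0 0).

Definition mrange (F : pref R -> R * R) : set (R * R) := F @` I.

Definition revenue (mu : {measure set (borelI D Rl Rh) -> \bar R})
  (F : pref R -> R * R) : R :=
  Rintegral mu (I : set (borelI D Rl Rh)) (fun P : borelI D Rl Rh => (F P).1).

Definition admissible_finite (F : pref R -> R * R) : Prop :=
  [/\ mechanism F, strategy_proof F, individually_rational F &
      finite_set (mrange F)].

End Measures.

(* Main.v *)
Require Import Defs.
From HB Require Import structures.
From mathcomp Require Import all_boot all_order all_algebra.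
From mathcomp Require Import all_classical all_reals all_analysis.
Import Order.TTheory GRing.Theory Num.Theory.
Import numFieldNormedType.Exports.
Local Open Scope classical_set_scope.
Local Open Scope ring_scope.
Set Implicit Arguments.
Unset Strict Implicit.
Unset Printing Implicit Defensive.
From mathcomp Require Import ring lra.

Section Pref.
Context {R : realType}.
Variable P : pref R.
Hypothesis hP : classical_pref P.

Lemma cpZ x y : P x y -> Zs x /\ Zs y.
Proof. by case: hP => H _; apply: H. Qed.

Lemma cp_total x y : Zs x -> Zs y -> P x y \/ P y x.
Proof. by case: hP => _ [H _]; apply: H. Qed.

Lemma cp_trans x y z : P x y -> P y z -> P x z.
Proof. by case: hP => _ [_ [H _]]; apply: H. Qed.

Lemma cp_refl x : Zs x -> P x x.
Proof. by move=> zx; case: (cp_total zx zx). Qed.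

Lemma cp_nstrict x y : Zs x -> Zs y -> ~ P x y -> strict P y x.
Proof. by move=> zx zy nxy; split => //; case: (cp_total zx zy). Qed.

Lemma strict_trans_l x y z : strict P x y -> P y z -> strict P x z.
Proof.
move=> [xy nyx] yz; split; first exact: cp_trans xy yz.
by move=> zx; apply: nyx; apply: cp_trans yz zx.
Qed.

Lemma strict_trans_r x y z : P x y -> strict P y z -> strict P x z.
Proof.
move=> xy [yz nzy]; split; first exact: cp_trans xy yz.
by move=> zx; apply: nzy; apply: cp_trans zx xy.
Qed.

Lemma ZsE (x : R * R) : Zs x <-> 0 <= x.1 /\ 0 <= x.2 /\ x.2 <= 1.
Proof. by rewrite /Zs /=; split => [[-> /andP[-> ->]]|[-> [-> ->]]]. Qed.

Lemma cp_tmono t1 t2 q : Zs (t1, q) -> Zs (t2, q) -> t1 < t2 ->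
  strict P (t1, q) (t2, q).
Proof. by case: hP => _ [_ [_ [H _]]]; apply: H. Qed.

Lemma cp_qmono t q1 q2 : Zs (t, q1) -> Zs (t, q2) -> q1 < q2 ->
  strict P (t, q2) (t, q1).
Proof. by case: hP => _ [_ [_ [_ [H _]]]]; apply: H. Qed.

Lemma cp_dom x y : Zs x -> Zs y -> x.1 <= y.1 -> y.2 <= x.2 -> P x y.
Proof.
case: x => a b; case: y => c d /= zx zy h1 h2.
have zm : Zs (a, d).
  by move: zx zy => /ZsE[? _] /ZsE[_ [? ?]]; apply/ZsE.
have xm : P (a, b) (a, d).
  move: h2; rewrite le_eqVlt => /orP[/eqP e|lt].
    by rewrite e; apply: cp_refl.
  by case: (cp_qmono zm zx lt).
have my : P (a, d) (c, d).
  move: h1; rewrite le_eqVlt => /orP[/eqP e|lt].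
    by rewrite e; apply: cp_refl.
  by case: (cp_tmono zm zy lt).
exact: cp_trans xm my.
Qed.

Lemma cp_sdom x y : Zs x -> Zs y -> x.1 <= y.1 -> y.2 <= x.2 -> x <> y ->
  strict P x y.
Proof.
case: x => a b; case: y => c d /= zx zy h1 h2 nxy.
have zm : Zs (a, d).
  by move: zx zy => /ZsE[? _] /ZsE[_ [? ?]]; apply/ZsE.
move: h2; rewrite le_eqVlt => /orP[/eqP e|lt2].
  move: h1; rewrite le_eqVlt => /orP[/eqP e1|lt1].
    by exfalso; apply: nxy; rewrite e e1.
  by move: zy; rewrite e => zy; exact: cp_tmono zx zy lt1.
have s1 : strict P (a, b) (a, d) by apply: cp_qmono.
apply: strict_trans_l s1 _.
by apply: cp_dom.
Qed.

Lemma closed_ball_out (S : set (R*R)) (v : R*R) : closed S -> ~ S v ->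
  exists2 e : R, 0 < e & forall w : R*R,
    `|v.1 - w.1| < e -> `|v.2 - w.2| < e -> ~ S w.
Proof.
move=> cS nSv.
have : open (~` S) by exact: closed_openC.
move=> /(_ v nSv) /nbhs_ballP [e e0 He].
exists e => // w h1 h2.
by apply: He; split.
Qed.

Lemma open_sr u v : strict P u v -> exists2 e : R, 0 < e & forall w,
  Zs w -> `|v.1 - w.1| < e -> `|v.2 - w.2| < e -> strict P u w.
Proof.
move=> [uv nvu].
have [zu zv] := cpZ uv.
have cl : closed [set x | P x u] by case: hP => _ [_ [_ [_ [_ [H _]]]]]; apply: H.
have [e e0 He] := closed_ball_out cl nvu.
exists e => // w zw h1 h2.
exact: cp_nstrict zw zu (He w h1 h2).
Qed.

Lemma open_sl u v : strict P u v -> exists2 e : R, 0 < e & forall w,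
  Zs w -> `|u.1 - w.1| < e -> `|u.2 - w.2| < e -> strict P w v.
Proof.
move=> [uv nvu].
have [zu zv] := cpZ uv.
have cl : closed [set x | P v x] by case: hP => _ [_ [_ [_ [_ [_ H]]]]]; apply: H.
have [e e0 He] := closed_ball_out cl nvu.
exists e => // w zw h1 h2.
exact: cp_nstrict zv zw (He w h1 h2).
Qed.

End Pref.

Section Conn.
Context {R : realType}.

Definition locopen (a b : R) (A : set R) :=
  forall s, a <= s <= b -> A s ->
    exists2 e : R, 0 < e & forall s', a <= s' <= b -> `|s - s'| < e -> A s'.

Lemma conn (a b : R) (A B : set R) : a <= b ->
  (forall s, a <= s <= b -> A s \/ B s) ->
  (forall s, a <= s <= b -> A s -> B s -> False) ->
  locopen a b A -> locopen a b B -> A a -> B b -> False.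
Proof.
move=> ab cov dis oA oB Aa Bb.
pose S := [set s | a <= s /\ s <= b /\ (forall r, a <= r -> r <= s -> A r)].
have Sa : S a.
  split; first by []; split; first by [].
  by move=> r ar ra; have -> : r = a by apply/eqP; rewrite eq_le ra ar.
have hS : has_sup S by split; [exists a | exists b => s [_ []]].
set m := sup S.
have am : a <= m by apply: sup_upper_bound.
have mb : m <= b by apply: ge_sup; [exists a | move=> s [_ []]].
have key : forall r, a <= r -> r < m -> A r.
  move=> r ar rm.
  have [s [_ [_ Hs]] /= ls] := @sup_adherent _ S (m - r) (ltac:(by rewrite subr_gt0)) hS.
  apply: Hs => //; apply: ltW; move: ls; rewrite /m opprB addrC subrK.
  by [].
have amb : a <= m <= b by rewrite am mb.
case: (cov m amb) => [Am|Bm].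
  move: mb; rewrite le_eqVlt => /orP[/eqP mb|mb].
    by apply: (dis b); [rewrite ab lexx| rewrite -mb |].
  have [e e0 He] := oA m amb Am.
  pose s' := Num.min (m + e / 2) b.
  have ms' : m < s' by rewrite lt_min mb andbT ltrDl divr_gt0.
  have Ss' : S s'.
    split; first by apply: le_trans am (ltW ms').
    split; first by rewrite ge_min lexx orbT.
    move=> r ar rs'.
    case: (ltgtP r m) => [rm|mr|->]; first exact: key.
      apply: He.
        by rewrite ar (le_trans rs') // ge_min lexx orbT.
      rewrite distrC ger0_norm ?subr_ge0 ?ltW //.
      have : r <= m + e / 2 by apply: (le_trans rs'); rewrite ge_min lexx.
      move=> h; apply: (le_lt_trans (y := e / 2)); first by rewrite lerBlDl.
      by rewrite ltr_pdivrMr // ltr_pMr // ltr1n.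
    by [].
  have := sup_upper_bound hS Ss'.
  by rewrite -/m leNgt ms'.
move: am; rewrite le_eqVlt => /orP[/eqP am|am].
  by apply: (dis a); [rewrite lexx ab| |rewrite am].
have [e e0 He] := oB m amb Bm.
pose r := Num.max a (m - e / 2).
have rm : r < m by rewrite gt_max am /= ltrBlDr ltrDl divr_gt0.
have ar : a <= r by rewrite le_max lexx.
apply: (dis r); first by rewrite ar (le_trans (ltW rm)).
  exact: key.
apply: He; first by rewrite ar (le_trans (ltW rm)).
rewrite ger0_norm ?subr_ge0 ?ltW //.
have : m - e / 2 <= r by rewrite le_max lexx orbT.
move=> h; apply: (le_lt_trans (y := e / 2)).
  by rewrite lerBlDr addrC -lerBlDr.
by rewrite ltr_pdivrMr // ltr_pMr // ltr1n.
Qed.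

End Conn.
Section IVT.
Context {R : realType}.

Definition pcont (f : R -> R * R) := forall s (e : R), 0 < e ->
  exists2 d : R, 0 < d & forall s', `|s - s'| < d ->
    `|(f s).1 - (f s').1| < e /\ `|(f s).2 - (f s').2| < e.

Lemma pcont_h (h : R) : pcont (fun t => (t, h)).
Proof. by move=> s e e0; exists e => // s' hs /=; rewrite subrr normr0. Qed.

Lemma pcont_v (t : R) : pcont (fun q => (t, q)).
Proof. by move=> s e e0; exists e => // s' hs /=; rewrite subrr normr0. Qed.

Definition indif (P : pref R) x y := P x y /\ P y x.

Lemma locopen_strict_l (P : pref R) (hP : classical_pref P) (f : R -> R * R) c a b :
  pcont f -> (forall s, a <= s <= b -> Zs (f s)) ->
  locopen a b (fun s => strict P (f s) c).
Proof.
move=> cf zf s abs st.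
have [e e0 He] := open_sl hP st.
have [d d0 Hd] := cf s e e0.
exists d => // s' abs' ds; have [h1 h2] := Hd s' ds.
exact: He (zf s' abs') h1 h2.
Qed.

Lemma locopen_strict_r (P : pref R) (hP : classical_pref P) (f : R -> R * R) c a b :
  pcont f -> (forall s, a <= s <= b -> Zs (f s)) ->
  locopen a b (fun s => strict P c (f s)).
Proof.
move=> cf zf s abs st.
have [e e0 He] := open_sr hP st.
have [d d0 Hd] := cf s e e0.
exists d => // s' abs' ds; have [h1 h2] := Hd s' ds.
exact: He (zf s' abs') h1 h2.
Qed.

Lemma ivt_pref (P : pref R) (hP : classical_pref P) (f : R -> R * R) c a b :
  a <= b -> pcont f -> (forall s, a <= s <= b -> Zs (f s)) -> Zs c ->
  P (f a) c -> P c (f b) -> exists2 s, a <= s <= b & indif P (f s) c.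
Proof.
move=> ab cf zf zc Pa Pb.
apply: contrapT => nex.
have nind : forall s, a <= s <= b -> ~ indif P (f s) c.
  by move=> s abs ind; apply: nex; exists s.
apply: (@conn R a b (fun s => strict P (f s) c) (fun s => strict P c (f s))) => //.
- move=> s abs; case: (cp_total hP (zf s abs) zc) => H.
    by left; split => // H'; apply: (nind s abs).
  by right; split => // H'; apply: (nind s abs).
- by move=> s _ [_ H] [H' _].
- exact: locopen_strict_l.
- exact: locopen_strict_r.
- split => // H; apply: (nind a) => //; by rewrite lexx ab.
- split => // H; apply: (nind b) => //; by rewrite lexx ab.
Qed.

End IVT.

Section Cross.
Context {R : realType}.
Variables P Q : pref R.
Hypotheses (hP : classical_pref P) (hQ : classical_pref Q).
Variable c : R * R.
Hypothesis zc : Zs c.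
Hypothesis ND : forall v, Zs v -> indif P v c -> indif Q v c -> v = c.

Definition pat1 (h : R) := exists t, strict P c (t, h) /\ strict Q (t, h) c.
Definition pat2 (h : R) := exists t, strict P (t, h) c /\ strict Q c (t, h).

Lemma Zs_pt (t h : R) : 0 <= t -> 0 <= h -> h <= 1 -> Zs (t, h).
Proof. by move=> *; apply/ZsE. Qed.

Lemma cover h T : c.2 < h -> h <= 1 -> c.1 <= T -> Q c (T, h) -> pat1 h \/ pat2 h.
Proof.
move=> ch h1 cT QT.
have [c1 [c2 c21]] := (@ZsE _ c).1 zc.
have h0 : 0 <= h by apply: le_trans c2 (ltW ch).
have zf : forall s, c.1 <= s <= T -> Zs (s, h).
  by move=> s /andP[cs _]; apply: Zs_pt => //; apply: le_trans cs.
have Q0 : Q (c.1, h) c.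
  by apply: (cp_dom hQ) => //; [apply: zf; rewrite lexx cT | apply: ltW].
have [tau /andP[ct tT] [Q1 Q2]] := ivt_pref hQ cT (pcont_h h) zf zc Q0 QT.
have ztau : Zs (tau, h) by apply: zf; rewrite ct tT.
have ctau : c.1 < tau.
  rewrite lt_neqAle ct andbT; apply/eqP => e.
  have : strict Q (tau, h) c.
    apply: (cp_sdom hQ) => //; first by rewrite -e.
      exact: ltW.
    by move=> ee; move: ch; rewrite -ee /= ltxx.
  by case.
case: (pselect (P (tau, h) c)) => [Ptc|Ptc]; case: (pselect (P c (tau, h))) => [Pct|Pct].
- by exfalso; have := ND ztau (conj Ptc Pct) (conj Q1 Q2) => ee;
     move: ch; rewrite -ee /= ltxx.
-
  have st : strict P (tau, h) c by split.
  have [e e0 He] := open_sl hP st.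
  right; exists (tau + e / 2); split.
    apply: He.
    - by apply: Zs_pt => //; apply: addr_ge0; [apply: le_trans ct | apply: ltW; apply: divr_gt0].
    - by rewrite /= opprD addrA subrr sub0r normrN ger0_norm ?ltW ?divr_gt0 // ltr_pdivrMr // ltr_pMr // ltr1n.
    - by rewrite /= subrr normr0.
  apply: (strict_trans_r hQ) Q2 _; apply: (cp_tmono hQ) => //.
    by apply: Zs_pt => //; apply: addr_ge0; [apply: le_trans ct | apply: ltW; apply: divr_gt0].
  by rewrite ltrDl divr_gt0.
-
  have st : strict P c (tau, h) by split.
  have [e e0 He] := open_sr hP st.
  pose d := Num.min e (tau - c.1) / 2.
  have d0 : 0 < d by rewrite divr_gt0 // lt_min e0 subr_gt0.
  have dlt : d < Num.min e (tau - c.1).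
    by rewrite ltr_pdivrMr // ltr_pMr // ?ltr1n // lt_min e0 subr_gt0.
  have zt : Zs (tau - d, h).
    apply: Zs_pt => //; apply: le_trans c1 _; rewrite lerBrDr -lerBrDl.
    by apply: ltW; apply: lt_le_trans dlt _; rewrite ge_min lexx orbT.
  left; exists (tau - d); split.
    apply: He => //=; last by rewrite subrr normr0.
    rewrite opprB addrC subrK ger0_norm ?ltW //.
    by apply: lt_le_trans dlt _; rewrite ge_min lexx.
  apply: (strict_trans_l hQ) _ Q1; apply: (cp_tmono hQ) => //.
  by rewrite ltrBlDr ltrDl.
- by exfalso; case: (cp_total hP ztau zc).
Qed.

Lemma disj h : pat1 h -> pat2 h -> False.
Proof.
move=> [t1 [P1 Q1]] [t2 [P2 Q2]].
have sP : strict P (t2, h) (t1, h) by apply: (strict_trans_l hP) P2 _; case: P1.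
have sQ : strict Q (t1, h) (t2, h) by apply: (strict_trans_l hQ) Q1 _; case: Q2.
have [z1 z2] := cpZ hP sP.1.
case: (leP t1 t2) => lt.
  by case: sP => _; apply; apply: (cp_dom hP).
by case: sQ => _; apply; apply: (cp_dom hQ) => //; apply: ltW.
Qed.

Lemma lo1 lo hi : 0 <= lo -> hi <= 1 -> locopen lo hi pat1.
Proof.
move=> l0 h1 s /andP[ls sh] [t [st1 st2]].
have [e1 e10 He1] := open_sr hP st1.
have [e2 e20 He2] := open_sl hQ st2.
exists (Num.min e1 e2); first by rewrite lt_min e10 e20.
move=> s' /andP[ls' s'h] ds; exists t.
have zt : Zs (t, s').
  have [t0 _] := (ZsE _).1 (cpZ hP st1.1).2.
  by apply: Zs_pt => //; [apply: le_trans ls' | apply: le_trans h1].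
move: ds; rewrite lt_min => /andP[d1 d2].
by split; [apply: He1 | apply: He2] => //=; rewrite subrr normr0.
Qed.

Lemma lo2 lo hi : 0 <= lo -> hi <= 1 -> locopen lo hi pat2.
Proof.
move=> l0 h1 s /andP[ls sh] [t [st1 st2]].
have [e1 e10 He1] := open_sl hP st1.
have [e2 e20 He2] := open_sr hQ st2.
exists (Num.min e1 e2); first by rewrite lt_min e10 e20.
move=> s' /andP[ls' s'h] ds; exists t.
have zt : Zs (t, s').
  have [t0 _] := (ZsE _).1 (cpZ hP st1.1).1.
  by apply: Zs_pt => //; [apply: le_trans ls' | apply: le_trans h1].
move: ds; rewrite lt_min => /andP[d1 d2].
by split; [apply: He1 | apply: He2] => //=; rewrite subrr normr0.
Qed.

Lemma cross h1 h2 H T : c.2 < h1 -> h1 <= H -> c.2 < h2 -> h2 <= H -> H <= 1 ->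
  c.1 <= T -> Q c (T, H) -> pat1 h1 -> pat2 h2 -> False.
Proof.
move=> ch1 h1H ch2 h2H H1 cT QT p1 p2.
have [c1 [c2 c21]] := (@ZsE _ c).1 zc.
have T0 : 0 <= T by apply: le_trans cT.
have cov : forall h, c.2 < h -> h <= H -> pat1 h \/ pat2 h.
  move=> h ch hH; apply: (cover (T := T)) => //; first by apply: le_trans H1.
  have c2h : 0 <= h by apply: le_trans c2 (ltW ch).
  have h1' : h <= 1 by apply: le_trans H1.
  apply: (cp_trans hQ) QT _; apply: (cp_dom hQ) => //=; apply: Zs_pt => //.
  exact: le_trans hH.
have z1 : 0 <= h1 by apply: le_trans c2 (ltW ch1).
have z2 : 0 <= h2 by apply: le_trans c2 (ltW ch2).
have u1 : h1 <= 1 by apply: le_trans H1.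
have u2 : h2 <= 1 by apply: le_trans H1.
case: (leP h1 h2) => hh.
  apply: (@conn R h1 h2 pat1 pat2) => //.
  - by move=> s /andP[a b]; apply: cov; [apply: lt_le_trans a | apply: le_trans h2H].
  - by move=> s _; apply: disj.
  - exact: lo1.
  - exact: lo2.
apply: (@conn R h2 h1 pat2 pat1) => //; first exact: ltW.
- by move=> s /andP[a b]; rewrite or_comm; apply: cov; [apply: lt_le_trans a | apply: le_trans h1H].
- by move=> s _ a b; apply: (disj b a).
- exact: lo2.
- exact: lo1.
Qed.

End Cross.

Section Orient.
Context {R : realType}.
Variables P Q : pref R.
Hypotheses (hP : classical_pref P) (hQ : classical_pref Q).
Hypothesis NDall : forall c v : R * R, Zs c -> Zs v ->
  indif P v c -> indif Q v c -> v = c.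

Definition Pat1 (c : R * R) := exists h t T, [/\ c.2 < h, h <= 1, c.1 < T,
  strict Q c (T, h) & strict P c (t, h) /\ strict Q (t, h) c].
Definition Pat2 (c : R * R) := exists h t T, [/\ c.2 < h, h <= 1, c.1 < T,
  strict Q c (T, h) & strict P (t, h) c /\ strict Q c (t, h)].

Lemma Pat_disj c : Zs c -> Pat1 c -> Pat2 c -> False.
Proof.
move=> zc [h1 [t1 [T1 [ch1 h11 cT1 QT1 [P1 Q1]]]]] [h2 [t2 [T2 [ch2 h21 cT2 QT2 [P2 Q2]]]]].
have ND : forall v, Zs v -> indif P v c -> indif Q v c -> v = c.
  by move=> v zv; apply: NDall.
case: (leP h1 h2) => hh.
  apply: (cross hP hQ zc ND (h1 := h1) (h2 := h2) (H := h2) (T := T2)) => //.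
  - exact: ltW.
  - exact: QT2.1.
  - by exists t1.
  - by exists t2.
apply: (cross hP hQ zc ND (h1 := h1) (h2 := h2) (H := h1) (T := T1)) => //.
- exact: ltW.
- exact: ltW.
- exact: QT1.1.
- by exists t1.
- by exists t2.
Qed.

Lemma Pat_cover c : Zs c -> c.2 < 1 -> Pat1 c \/ Pat2 c.
Proof.
move=> zc c21.
have [c1 [c2 _]] := (@ZsE _ c).1 zc.
have ND : forall v, Zs v -> indif P v c -> indif Q v c -> v = c.
  by move=> v zv; apply: NDall.
set T := c.1 + 1.
have zT : Zs (T, c.2) by apply: Zs_pt => //; rewrite /T; lra.
have zc' : Zs (c.1, c.2) by rewrite -surjective_pairing.
have cT : c.1 < T by rewrite /T ltrDl.
have s0 : strict Q c (T, c.2).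
  by have := cp_tmono hQ zc' zT cT; rewrite -surjective_pairing.
have [e e0 He] := open_sr hQ s0.
set h := c.2 + Num.min e (1 - c.2) / 2.
have m0 : 0 < Num.min e (1 - c.2) by rewrite lt_min e0 subr_gt0.
have mle : Num.min e (1 - c.2) <= e by rewrite ge_min lexx.
have mle2 : Num.min e (1 - c.2) <= 1 - c.2 by rewrite ge_min lexx orbT.
have ch : c.2 < h by rewrite /h; lra.
have h1 : h <= 1 by rewrite /h; lra.
have sT : strict Q c (T, h).
  apply: He => /=; first by apply: Zs_pt => //; [rewrite /T; lra | rewrite /h; lra].
    by rewrite subrr normr0.
  rewrite /h ler0_norm; lra.
case: (cover hP hQ zc ND ch h1 (ltW cT) sT.1) => [[t [p q]]|[t [p q]]].
  by left; exists h, t, T; split.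
by right; exists h, t, T; split.
Qed.

Lemma conv_lt1 (a b s : R) : a < 1 -> b < 1 -> 0 <= s -> s <= 1 -> a + s * (b - a) < 1.
Proof.
move=> ha hb s0 s1. have : 0 <= (1 - s) * (1 - a) by apply: mulr_ge0; lra.
have : 0 <= s * (1 - b) by apply: mulr_ge0; lra.
case: (ltP s 1) => hs; nra.
Qed.

Definition seg (x w : R * R) (s : R) : R * R :=
  (x.1 + s * (w.1 - x.1), x.2 + s * (w.2 - x.2)).

Lemma seg_Z x w s : Zs x -> Zs w -> 0 <= s <= 1 -> Zs (seg x w s).
Proof.
move=> /ZsE[a1 [a2 a3]] /ZsE[b1 [b2 b3]] /andP[s0 s1].
by apply/ZsE; rewrite /seg /=; split; [|split]; nra.
Qed.

Lemma seg_cont x w : pcont (seg x w).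
Proof.
move=> s e e0.
set K := `|w.1 - x.1| + `|w.2 - x.2| + 1.
have K0 : 0 < K by rewrite /K; have := normr_ge0 (w.1 - x.1); have := normr_ge0 (w.2 - x.2); lra.
exists (e / K); first by rewrite divr_gt0.
move=> s' hs.
have key : forall a : R, `|a| <= K -> `|s * a - s' * a| < e.
  move=> a ha; rewrite -mulrBl normrM.
  have hK : `|s - s'| * K < e by rewrite -ltr_pdivlMr.
  have := normr_ge0 (s - s'); have := normr_ge0 a; nra.
have E : forall b a : R, b + s * a - (b + s' * a) = s * a - s' * a.
  by move=> b a; ring.
rewrite /seg /= !E; split.
  apply: key.
  rewrite /K; have := normr_ge0 (w.2 - x.2); lra.
apply: key.
rewrite /K; have := normr_ge0 (w.1 - x.1); lra.
Qed.

Lemma Pat1_open x w : Zs x -> Zs w -> locopen 0 1 (fun s => Pat1 (seg x w s)).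
Proof.
move=> zx zw s s01 [h [t [T [ch h1 cT QT [Pc Qc]]]]].
have [e1 e10 He1] := open_sl hQ QT.
have [e2 e20 He2] := open_sl hP Pc.
have [e3 e30 He3] := open_sr hQ Qc.
set e := Num.min (Num.min e1 e2) (Num.min e3 (Num.min (h - (seg x w s).2) (T - (seg x w s).1))).
have e0 : 0 < e by rewrite /e !lt_min e10 e20 e30 !subr_gt0 ch cT.
have [d d0 Hd] := seg_cont x w s e0.
exists d => // s' s01' ds.
have [d1 d2] := Hd s' ds.
have z' := seg_Z zx zw s01'.
move: d1 d2; rewrite /e !lt_min => /andP[/andP[a1 a2] /andP[a3 /andP[a4 a5]]]
  /andP[/andP[b1 b2] /andP[b3 /andP[b4 b5]]].
exists h, t, T; split => //.
- by move: b4; rewrite ltr_norml; lra.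
- by move: a5; rewrite ltr_norml; lra.
- exact: He1.
- by split; [apply: He2 | apply: He3].
Qed.

Lemma Pat2_open x w : Zs x -> Zs w -> locopen 0 1 (fun s => Pat2 (seg x w s)).
Proof.
move=> zx zw s s01 [h [t [T [ch h1 cT QT [Pc Qc]]]]].
have [e1 e10 He1] := open_sl hQ QT.
have [e2 e20 He2] := open_sr hP Pc.
have [e3 e30 He3] := open_sl hQ Qc.
set e := Num.min (Num.min e1 e2) (Num.min e3 (Num.min (h - (seg x w s).2) (T - (seg x w s).1))).
have e0 : 0 < e by rewrite /e !lt_min e10 e20 e30 !subr_gt0 ch cT.
have [d d0 Hd] := seg_cont x w s e0.
exists d => // s' s01' ds.
have [d1 d2] := Hd s' ds.
have z' := seg_Z zx zw s01'.
move: d1 d2; rewrite /e !lt_min => /andP[/andP[a1 a2] /andP[a3 /andP[a4 a5]]]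
  /andP[/andP[b1 b2] /andP[b3 /andP[b4 b5]]].
exists h, t, T; split => //.
- by move: b4; rewrite ltr_norml; lra.
- by move: a5; rewrite ltr_norml; lra.
- exact: He1.
- by split; [apply: He2 | apply: He3].
Qed.

Lemma orient_const x y w z : Zs x -> Zs y -> Zs w -> Zs z ->
  ltZ x y -> indif Q x y -> strict P x y ->
  ltZ w z -> Q w z -> strict P z w -> False.
Proof.
move=> zx zy zw zz [xy1 xy2] [Qxy Qyx] Pxy [wz1 wz2] Qwz Pzw.
have [x1 [x2 x3]] := (@ZsE _ x).1 zx.
have [y1 [y2 y3]] := (@ZsE _ y).1 zy.
have [w1 [w2 w3]] := (@ZsE _ w).1 zw.
have [z1 [z2 z3]] := (@ZsE _ z).1 zz.
apply: (@conn R 0 1 (fun s => Pat1 (seg x w s)) (fun s => Pat2 (seg x w s))).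
- lra.
- move=> s s01; apply: Pat_cover; first exact: seg_Z.
  by case/andP: s01 => *; rewrite /seg /=; apply: conv_lt1 => //; lra.
- by move=> s s01; apply: Pat_disj; apply: seg_Z.
- exact: Pat1_open.
- exact: Pat2_open.
-
  have -> : seg x w 0 = x by rewrite /seg !mul0r !addr0 -surjective_pairing.
  have [e e0 He] := open_sr hP Pxy.
  set t := y.1 - Num.min e (y.1 - x.1) / 2.
  have m0 : 0 < Num.min e (y.1 - x.1) by rewrite lt_min e0 subr_gt0.
  have mle : Num.min e (y.1 - x.1) <= e by rewrite ge_min lexx.
  have mle2 : Num.min e (y.1 - x.1) <= y.1 - x.1 by rewrite ge_min lexx orbT.
  have zy' : Zs (y.1, y.2) by rewrite -surjective_pairing.
  have zt : Zs (t, y.2) by apply: Zs_pt => //; rewrite /t; lra.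
  have zT : Zs (y.1 + 1, y.2) by apply: Zs_pt => //; lra.
  exists y.2, t, (y.1 + 1); split => //; [lra| |split].
  + apply: (strict_trans_r hQ) Qxy _.
    by have := cp_tmono hQ zy' zT (ltac:(lra)); rewrite -surjective_pairing.
  + apply: He => //=; last by rewrite subrr normr0.
    rewrite /t ger0_norm; lra.
  + apply: (strict_trans_l hQ) _ Qyx.
    have ty : t < y.1 by rewrite /t; lra.
    by have := cp_tmono hQ zt zy' ty; rewrite -surjective_pairing.
-
  have -> : seg x w 1 = w.
    by rewrite /seg !mul1r !addrA !(addrC x.1) !(addrC x.2) !addrK -surjective_pairing.
  have [e e0 He] := open_sl hP Pzw.
  set t := z.1 + e / 2.
  have zz' : Zs (z.1, z.2) by rewrite -surjective_pairing.
  have zt : Zs (t, z.2) by apply: Zs_pt => //; rewrite /t; have := divr_gt0 e0 (ltr0n R 2); lra.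
  have zT : Zs (z.1 + 1, z.2) by apply: Zs_pt => //; lra.
  have e2 : 0 < e / 2 by rewrite divr_gt0.
  exists z.2, t, (z.1 + 1); split => //; [lra| |split].
  + apply: (strict_trans_r hQ) Qwz _.
    by have := cp_tmono hQ zz' zT (ltac:(lra)); rewrite -surjective_pairing.
  + apply: He => //=; last by rewrite subrr normr0.
    rewrite /t ler0_norm; lra.
  + apply: (strict_trans_r hQ) Qwz _.
    have ty : z.1 < t by rewrite /t; lra.
    by have := cp_tmono hQ zz' zt ty; rewrite -surjective_pairing.
Qed.

End Orient.

Section Order.
Context {R : realType}.

Lemma ND_sc (P Q : pref R) : classical_pref P -> classical_pref Q ->
  single_crossing P Q ->
  forall c v : R * R, Zs c -> Zs v -> indif P v c -> indif Q v c -> v = c.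
Proof.
move=> hP hQ sc c v zc zv iP iQ.
have rP := cp_refl hP zc; have rQ := cp_refl hQ zc.
by apply: (sc c c v c zc zc) => //; split.
Qed.

Lemma ltZ_neq (x y : R * R) : ltZ x y -> x <> y.
Proof. by move=> [h _] e; move: h; rewrite e ltxx. Qed.

Lemma L1 (P Q : pref R) x y : classical_pref P -> classical_pref Q ->
  (P <> Q -> single_crossing P Q) -> Zs x -> Zs y -> ltZ x y ->
  indif Q x y -> strict P x y -> precP P Q.
Proof.
move=> hP hQ sc zx zy xy iQ sP.
have nPQ : P <> Q by move=> e; case: sP => _; rewrite e; case: iQ.
split => // z w [[zw lw] Qwz]; split; first by split.
case: lw => [->|lt]; first by apply: (cp_refl hP); have [] := cpZ hQ Qwz.
apply: contrapT => nP.
have [_ zz] := cpZ hQ Qwz.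
have sPzw := cp_nstrict hP zw zz nP.
exact: (orient_const hP hQ (ND_sc hP hQ (sc nPQ)) zx zy zw zz xy iQ sP lt Qwz sPzw).
Qed.

Lemma ivt_pref2 (P : pref R) (hP : classical_pref P) (f : R -> R * R) c a b :
  a <= b -> pcont f -> (forall s, a <= s <= b -> Zs (f s)) -> Zs c ->
  P c (f a) -> P (f b) c -> exists2 s, a <= s <= b & indif P (f s) c.
Proof.
move=> ab cf zf zc Pa Pb.
apply: contrapT => nex.
have nind : forall s, a <= s <= b -> ~ indif P (f s) c.
  by move=> s abs ind; apply: nex; exists s.
apply: (@conn R a b (fun s => strict P c (f s)) (fun s => strict P (f s) c)) => //.
- move=> s abs; case: (cp_total hP (zf s abs) zc) => H.
    by right; split => // H'; apply: (nind s abs).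
  by left; split => // H'; apply: (nind s abs).
- by move=> s _ [_ H] [H' _].
- exact: locopen_strict_r.
- exact: locopen_strict_l.
- split => // H; apply: (nind a) => //; by rewrite lexx ab.
- split => // H; apply: (nind b) => //; by rewrite lexx ab.
Qed.

Lemma L2 (P Q : pref R) x y : classical_pref P -> classical_pref Q ->
  (P <> Q -> single_crossing P Q) -> (Q <> P -> single_crossing Q P) ->
  Zs x -> Zs y -> ltZ x y ->
  indif Q x y -> strict P y x -> precP Q P.
Proof.
move=> hP hQ sc sc' zx zy [xy1 xy2] iQ sP.
have [x1 [x2 x3]] := (@ZsE _ x).1 zx.
have [y1 [y2 y3]] := (@ZsE _ y).1 zy.
have zf : forall q, x.2 <= q <= y.2 -> Zs (x.1, q).
  by move=> q /andP[a b]; apply: Zs_pt => //; lra.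
have zx' : Zs (x.1, x.2) by rewrite -surjective_pairing.
have zy' : Zs (y.1, y.2) by rewrite -surjective_pairing.
have Pa : P y (x.1, x.2) by rewrite -surjective_pairing; case: sP.
have sb : strict P (x.1, y.2) y.
  by have := cp_tmono hP (zf y.2 (ltac:(apply/andP; split; lra))) zy' xy1;
    rewrite -surjective_pairing.
have [q /andP[q1 q2] iP] :=
  ivt_pref2 hP (ltW xy2) (pcont_v x.1) zf zy Pa sb.1.
have qx : x.2 < q.
  rewrite lt_neqAle q1 andbT; apply/eqP => e; move: iP; rewrite -e.
  rewrite -surjective_pairing => -[H _]; by case: sP => _ /(_ H).
have qy : q < y.2.
  rewrite lt_neqAle q2 andbT; apply/eqP => e; move: iP; rewrite e.
  by move=> [_ H]; case: sb => _ /(_ H).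
have zu := zf q (ltac:(apply/andP; split; lra)).
have sQ : strict Q (x.1, q) y.
  apply: (strict_trans_l hQ) _ iQ.1.
  by have := cp_qmono hQ zx' zu qx; rewrite -surjective_pairing.
by apply: (L1 hQ hP sc' zu zy) => //; split.
Qed.

Variable D : set (pref R).
Hypothesis hD : rich_single_crossing D.

Lemma classD P : D P -> classical_pref P.
Proof. by case: hD => H _ _; apply: H. Qed.

Lemma scD P Q : D P -> D Q -> P <> Q -> single_crossing P Q.
Proof. by case: hD => _ H _; apply: H. Qed.

Lemma richD x y : Zs x -> Zs y -> ltZ x y -> exists2 P, D P & indif P x y.
Proof. by case: hD => _ _ H; apply: H. Qed.

Lemma lower_char a P x y : D a -> D P -> Zs x -> Zs y -> ltZ x y -> indif a x y ->
  strict P x y <-> precP P a.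
Proof.
move=> Da DP zx zy xy ia; have ha := classD Da; have hP := classD DP.
split => [sP|[nPa inc]].
  by apply: (L1 hP ha (scD DP Da) zx zy xy ia sP).
have Pxy : P x y.
  have := inc y x (conj (conj zx (or_intror xy)) ia.1).
  by case.
split => // Pyx.
apply: (ltZ_neq xy).
exact: ND_sc hP ha (scD DP Da nPa) y x zy zx (conj Pxy Pyx) ia.
Qed.

Lemma upper_char a P x y : D a -> D P -> Zs x -> Zs y -> ltZ x y -> indif a x y ->
  strict P y x <-> precP a P.
Proof.
move=> Da DP zx zy xy ia; have ha := classD Da; have hP := classD DP.
split => [sP|[naP inc]].
  by apply: (L2 hP ha (scD DP Da) (scD Da DP) zx zy xy ia sP).
have nPxy_ind : ~ (P x y /\ P y x).
  move=> [h1 h2]; apply: (ltZ_neq xy).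
  have nPa : P <> a by move=> e; apply: naP.
  exact: ND_sc hP ha (scD DP Da nPa) y x zy zx (conj h1 h2) ia.
case: (pselect (P y x)) => Pyx.
  by split => // Pxy; apply: nPxy_ind.
exfalso.
have sP := cp_nstrict hP zy zx Pyx.
have [x1 [x2 x3]] := (@ZsE _ x).1 zx.
have [y1 [y2 y3]] := (@ZsE _ y).1 zy.
case: xy => xy1 xy2.
have [e e0 He] := open_sr hP sP.
set t := y.1 - Num.min e (y.1 - x.1) / 2.
have m0 : 0 < Num.min e (y.1 - x.1) by rewrite lt_min e0 subr_gt0.
have mle : Num.min e (y.1 - x.1) <= e by rewrite ge_min lexx.
have mle2 : Num.min e (y.1 - x.1) <= y.1 - x.1 by rewrite ge_min lexx orbT.
have zt : Zs (t, y.2) by apply: Zs_pt => //; rewrite /t; lra.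
have zy' : Zs (y.1, y.2) by rewrite -surjective_pairing.
have Pxt : P x (t, y.2).
  suff : strict P x (t, y.2) by case.
  apply: (He (t, y.2)) => //=; last by rewrite subrr normr0.
  rewrite /t ger0_norm; lra.
have ty : t < y.1 by rewrite /t; lra.
have sat : strict a (t, y.2) x.
  apply: (strict_trans_l ha) _ ia.2.
  by have := cp_tmono ha zt zy' ty; rewrite -surjective_pairing.
have lt : ltZ x (t, y.2) by split => /=; rewrite /t; lra.
have := inc (t, y.2) x (conj (conj zx (or_intror lt)) Pxt).
by case=> _; case: sat.
Qed.

Lemma trichot a P x y : D a -> D P -> Zs x -> Zs y -> ltZ x y -> indif a x y ->
  P = a \/ precP P a \/ precP a P.
Proof.
move=> Da DP zx zy xy ia.
case: (pselect (P = a)) => [->|nPa]; first by left.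
right; have hP := classD DP; have ha := classD Da.
case: (pselect (P x y)) => Pxy.
  case: (pselect (P y x)) => Pyx.
    exfalso; apply: (ltZ_neq xy).
    exact: ND_sc hP ha (scD DP Da nPa) y x zy zx (conj Pxy Pyx) ia.
  by left; apply/(lower_char Da DP zx zy xy ia); split.
right; apply/(upper_char Da DP zx zy xy ia).
exact: (@cp_nstrict _ _ hP x y zx zy Pxy).
Qed.

End Order.

Section Meas.
Context {R : realType} (D : set (pref R)) (Rl Rh : pref R).
Hypothesis hD : rich_single_crossing D.
Local Notation I := (Defs.interval D Rl Rh).
Local Notation T := (borelI D Rl Rh).

Lemma I_D P : I P -> D P. Proof. by case. Qed.

Lemma meas_open (U : set (pref R)) : order_open D U ->
  measurable (U `&` I : set T).
Proof. by move=> oU; apply: sub_sigma_algebra; exists U. Qed.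

Lemma meas_I : measurable (I : set T).
Proof.
have -> : I = D `&` I by apply/seteqP; split => [P IP|P []//]; split => //; case: IP.
apply: meas_open; split => // P DP; exists D; split => //; by left.
Qed.

Lemma meas_lray a : D a -> measurable ([set P | I P /\ precP P a] : set T).
Proof.
move=> Da.
have -> : [set P | I P /\ precP P a] = [set P | D P /\ precP P a] `&` I.
  by apply/seteqP; split => [P [IP pa]|P [[_ pa] IP]]; split => //; split => //; case: IP.
apply: meas_open; split => [P []//|P HP]; exists [set P | D P /\ precP P a]; split => //.
by right; right; left; exists a.
Qed.

Lemma meas_uray a : D a -> measurable ([set P | I P /\ precP a P] : set T).
Proof.
move=> Da.
have -> : [set P | I P /\ precP a P] = [set P | D P /\ precP a P] `&` I.
  by apply/seteqP; split => [P [IP pa]|P [[_ pa] IP]]; split => //; split => //; case: IP.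
apply: meas_open; split => [P []//|P HP]; exists [set P | D P /\ precP a P]; split => //.
by right; left; exists a.
Qed.

Definition Aof (x y : R * R) : pref R := [get a | D a /\ indif a x y].

Lemma AofP x y : Zs x -> Zs y -> ltZ x y -> D (Aof x y) /\ indif (Aof x y) x y.
Proof.
move=> zx zy xy; apply: (@getPex _ [set a | D a /\ indif a x y]).
by have [a Da ia] := richD hD zx zy xy; exists a.
Qed.

Definition W (x y : R * R) : set T := [set P | I P /\ strict P x y].

Lemma dom_dich (x y : R * R) : ~ ltZ x y -> ~ ltZ y x ->
  (x.1 <= y.1 /\ y.2 <= x.2) \/ (y.1 <= x.1 /\ x.2 <= y.2).
Proof.
move=> n1 n2.
case: (pselect (x.1 <= y.1 /\ y.2 <= x.2)) => [h|h]; [by left|right].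
have nle : forall a b : R, ~ (a <= b) -> b < a by move=> a b /negP; rewrite -ltNge.
split.
- apply: contrapT => /nle lt1; apply: n1; split => //.
  apply: nle => h2; apply: h; split => //; exact: ltW.
- apply: contrapT => /nle lt2.
  case: (pselect (y.1 < x.1)) => h3; first by apply: n2; split.
  apply: h; split; last exact: ltW.
  by rewrite leNgt; apply/negP.
Qed.

Lemma meas_W x y : Zs x -> Zs y -> measurable (W x y).
Proof.
move=> zx zy.
case: (pselect (ltZ x y)) => xy.
  have [Da ia] := AofP zx zy xy.
  have -> : W x y = [set P | I P /\ precP P (Aof x y)].
    apply/seteqP; split => P [IP H]; split => //.
      by apply/(lower_char hD Da (I_D IP) zx zy xy ia).
    by apply/(lower_char hD Da (I_D IP) zx zy xy ia).
  exact: meas_lray.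
case: (pselect (ltZ y x)) => yx.
  have [Da ia] := AofP zy zx yx.
  have -> : W x y = [set P | I P /\ precP (Aof y x) P].
    apply/seteqP; split => P [IP H]; split => //.
      by apply/(upper_char hD Da (I_D IP) zy zx yx ia).
    by apply/(upper_char hD Da (I_D IP) zy zx yx ia).
  exact: meas_uray.
case: (pselect (x = y)) => [exy|nxy].
  have -> : W x y = set0.
    by apply/seteqP; split => P // [_ [h1 h2]]; apply: h2; rewrite exy in h1 *.
  exact: measurable0.
case: (dom_dich xy yx) => [[h1 h2]|[h1 h2]].
  have -> : W x y = I.
    apply/seteqP; split => P; first by case.
    move=> IP; split => //; exact: (@cp_sdom _ P (classD hD (I_D IP)) x y zx zy h1 h2 nxy).
  exact: meas_I.
have -> : W x y = set0.
  apply/seteqP; split => P // [IP [_ h]]; apply: h.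
  exact: (@cp_dom _ P (classD hD (I_D IP)) y x zy zx h1 h2).
exact: measurable0.
Qed.

Lemma meas_single x y : Zs x -> Zs y -> ltZ x y ->
  measurable ([set P | I P /\ P = Aof x y] : set T).
Proof.
move=> zx zy xy.
have [Da ia] := AofP zx zy xy.
have -> : [set P | I P /\ P = Aof x y] = I `\` (W x y `|` W y x).
  apply/seteqP; split => P.
    move=> [IP eP]; subst P; split => // -[[_ [_ h]]|[_ [_ h]]]; apply: h; [exact: ia.2 | exact: ia.1].
  move=> [IP nW]; split => //.
  case: (trichot hD Da (I_D IP) zx zy xy ia) => [//|[h|h]]; exfalso; apply: nW.
    by left; split => //; apply/(lower_char hD Da (I_D IP) zx zy xy ia).
  by right; split => //; apply/(upper_char hD Da (I_D IP) zx zy xy ia).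
by apply: measurableD; [exact: meas_I | apply: measurableU; apply: meas_W].
Qed.

End Meas.

Import HBNNSimple.

Lemma half_ne {R : realType} (m : R) : 0 < m -> m = m / 2 -> False.
Proof. move=> *; lra. Qed.

Section Main.
Context {R : realType} (D : set (pref R)) (Rl Rh : pref R).
Variable mu : {measure set (borelI D Rl Rh) -> \bar R}.
Variable Fc : pref R -> R * R.
Hypothesis hD : rich_single_crossing D.
Hypothesis hmu : probability_on mu.
Hypothesis mcont : continuous_measure mu.
Hypothesis mech : mechanism D Rl Rh Fc.
Hypothesis sp : strategy_proof D Rl Rh Fc.
Hypothesis ir : individually_rational D Rl Rh Fc.
Local Notation I := (Defs.interval D Rl Rh).
Local Notation T := (borelI D Rl Rh).
Local Notation C := (mrange D Rl Rh Fc).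

Variable e : nat -> R * R.
Hypothesis eC : forall k, C (e k) \/ e k = (0, 0).
Hypothesis eS : forall x, C x -> exists k, e k = x.

Lemma C_Z x : C x -> Zs x.
Proof. by move=> [P IP <-]; apply: mech. Qed.

Lemma Z00 : Zs ((0 : R), (0 : R)).
Proof. by apply/ZsE => /=; rewrite lexx ler01. Qed.

Lemma e_Z k : Zs (e k).
Proof. by case: (eC k) => [/C_Z //|->]; exact: Z00. Qed.

Lemma clI P : I P -> classical_pref P.
Proof. by move=> IP; apply: (classD hD); case: IP. Qed.

Lemma best_C P x : I P -> C x -> P (Fc P) x.
Proof. by move=> IP [P' IP' <-]; apply: sp. Qed.

Lemma best_e P k : I P -> P (Fc P) (e k).
Proof. by move=> IP; case: (eC k) => [Ce|->]; [exact: best_C | exact: ir]. Qed.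

Definition Tx (x : R * R) : set T :=
  [set P | I P /\ C x /\ (forall y, C y -> y <> x -> strict P x y)].

Lemma Tx_meas x : measurable (Tx x).
Proof.
case: (pselect (C x)) => Cx; last first.
  have -> : Tx x = set0 by apply/seteqP; split => P // [_ []].
  exact: measurable0.
pose V k : set T := if pselect (C (e k) /\ e k <> x) then W (D:=D) (Rl:=Rl) (Rh:=Rh) x (e k) else setT.
have -> : Tx x = I `&` \bigcap_k V k.
  apply/seteqP; split => P.
    move=> [IP [_ H]]; split => // k _; rewrite /V.
    case: (pselect (C (e k) /\ e k <> x)) => [[Ce ne]|h] //=.
    by split => //; apply: H.
  move=> [IP HV]; split => //; split => // y Cy nyx.
  have [k ek] := eS Cy.
  have := HV k Logic.I; rewrite /V.
  case: (pselect (C (e k) /\ e k <> x)) => [h|h] /=; first by rewrite ek => -[].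
  by exfalso; apply: h; rewrite ek.
apply: measurableI; first exact: meas_I.
apply: bigcapT_measurable => k; rewrite /V.
case: (pselect (C (e k) /\ e k <> x)) => [[Ce _]|_] /=.
  by apply: (meas_W hD); [exact: C_Z | exact: C_Z].
exact: measurableT.
Qed.

Lemma Tx_Fc x P : Tx x P -> Fc P = x.
Proof.
move=> [IP [Cx H]]; apply: contrapT => ne.
have CF : C (Fc P) by exists P.
by case: (H _ CF ne) => _; apply; apply: best_C.
Qed.

Definition Nset : set T := I `\` \bigcup_k Tx (e k).

Lemma Nset_meas : measurable Nset.
Proof.
apply: measurableD; first exact: meas_I.
by apply: bigcupT_measurable => k; apply: Tx_meas.
Qed.

Lemma single_null x y : Zs x -> Zs y -> ltZ x y ->
  mu ([set P | I P /\ P = Aof D x y] : set T) = 0.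
Proof.
move=> zx zy xy.
set A : set T := [set P | I P /\ P = Aof D x y].
have mA : measurable A by apply: meas_single.
have AI : A `<=` I by move=> P [].
have A1 : (mu A <= 1)%E.
  by case: hmu => _ <-; apply: le_measure => //; rewrite inE //; exact: meas_I.
have A0 : (0 <= mu A)%E by apply: measure_ge0.
apply/eqP; rewrite eq_le A0 andbT; apply: contrapT => /negP; rewrite -ltNge => Apos.
have fA : mu A = (fine (mu A))%:E by rewrite fineK // ge0_fin_numE // (le_lt_trans A1) // ltry.
have m0 : 0 < fine (mu A) by rewrite -lte_fin -fA.
have [B [mB BA muB]] := mcont mA AI Apos (c := fine (mu A) / 2)
  (ltac:(by rewrite divr_gt0)) (ltac:(by rewrite fA lte_fin ltr_pdivrMr // ltr_pMr // ltr1n)).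
case: (pselect (B = set0)) => [B0|B0].
  by move: muB; rewrite B0 measure0 => /esym/eqP; rewrite eqe gt_eqF // divr_gt0.
have BA' : B = A.
  apply/seteqP; split => // P AP; have [Q BQ] : B !=set0 by apply/set0P/eqP.
  have [_ eQ] := BA Q BQ; have [_ eP] := AP.
  by rewrite eP -eQ.
move: muB; rewrite BA' {1}fA => /eqP; rewrite eqe => /eqP h.
move: h m0; set m := fine (mu A) => h m0; exact: half_ne m0 h.
Qed.


Definition S j k : set T := if pselect (ltZ (e j) (e k))
  then [set P | I P /\ P = Aof D (e j) (e k)] else set0.

Lemma S_negl j k : mu.-negligible (S j k).
Proof.
rewrite /S; case: (pselect (ltZ (e j) (e k))) => h /=.
  exists [set P | I P /\ P = Aof D (e j) (e k)]; split => //.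
    exact: (meas_single hD (e_Z j) (e_Z k) h).
  exact: (single_null (e_Z j) (e_Z k) h).
by exists set0; split => //; rewrite measure0.
Qed.

Lemma Nset_null : mu Nset = 0.
Proof.
have nb : mu.-negligible (\bigcup_j \bigcup_k S j k).
  by apply: negligible_bigcup => j; apply: negligible_bigcup => k; apply: S_negl.
apply: (measure_negligible Nset_meas); apply: (negligibleS _ nb).
move=> P [IP nT].
have Cx : C (Fc P) by exists P.
have [j ej] := eS Cx.
have nT' : ~ Tx (Fc P) P by rewrite -ej => h; apply: nT; exists j.
have [y [Cy [nyx ns]]] : exists y, C y /\ y <> Fc P /\ ~ strict P (Fc P) y.
  apply: contrapT => H; apply: nT'; split => //; split => // y Cy nyx.
  by apply: contrapT => ns; apply: H; exists y.
have Pxy := best_C IP Cy.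
have Pyx : P y (Fc P) by apply: contrapT => h; apply: ns.
have [k ek] := eS Cy.
have hP := clI IP.
have DP : D P by case: IP.
have zx := C_Z Cx; have zy := C_Z Cy.
case: (pselect (ltZ (Fc P) y)) => xy.
  exists j => //; exists k => //; rewrite /S ej ek.
  case: (pselect (ltZ (Fc P) y)) => // _ /=; split => //.
  have [Da ia] := AofP hD zx zy xy.
  apply: contrapT => ne; apply: nyx.
  exact: esym (ND_sc hP (classD hD Da) (scD hD DP Da ne) zy zx (conj Pxy Pyx) ia).
case: (pselect (ltZ y (Fc P))) => yx.
  exists k => //; exists j => //; rewrite /S ej ek.
  case: (pselect (ltZ y (Fc P))) => // _ /=; split => //.
  have [Da ia] := AofP hD zy zx yx.
  apply: contrapT => ne; apply: nyx.
  exact: (ND_sc hP (classD hD Da) (scD hD DP Da ne) zx zy (conj Pyx Pxy) ia).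
exfalso.
case: (dom_dich xy yx) => [[h1 h2]|[h1 h2]].
  apply: ns; apply: (@cp_sdom _ P hP (Fc P) y zx zy h1 h2).
  by move=> e'; apply: nyx.
have [_ h] := @cp_sdom _ P hP y (Fc P) zy zx h1 h2 nyx.
exact: h.
Qed.

Definition K n : set T := \bigcup_(k in [set k | (k < n)%N]) Tx (e k).

Lemma K_meas n : measurable (K n).
Proof. by apply: bigcup_measurable => k _; apply: Tx_meas. Qed.

Lemma K_I n : K n `<=` I.
Proof. by move=> P [k _ []]. Qed.

Fixpoint best (P : pref R) (s : seq (R * R)) : R * R :=
  if s is x :: s' then (if `[< P x (best P s') >] then x else best P s') else (0, 0).

Lemma best_mem P s : best P s \in (0, 0) :: s.
Proof.
elim: s => [|x s IH] /=; first by rewrite mem_seq1.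
case: asboolP => _; first by rewrite !inE eqxx orbT.
by move: IH; rewrite !inE => /orP[->|->]; rewrite ?orbT.
Qed.

Lemma best_max P s : classical_pref P -> (forall z, z \in s -> Zs z) ->
  forall z, z \in (0, 0) :: s -> P (best P s) z.
Proof.
move=> hP; elim: s => [|x s IH] zs z /=.
  by rewrite mem_seq1 => /eqP ->; apply: (cp_refl hP); exact: Z00.
have zs' : forall z, z \in s -> Zs z by move=> w ws; apply: zs; rewrite inE ws orbT.
have zx : Zs x by apply: zs; rewrite inE eqxx.
have IH' := IH zs'.
have zb : Zs (best P s).
  by move: (best_mem P s); rewrite inE => /orP[/eqP ->|/zs' //]; exact: Z00.
rewrite !inE => hz.
case: asboolP => Pxb.
  move: hz => /orP[/eqP ->|/orP[/eqP ->|hz]].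
  - by apply: (cp_trans hP) Pxb _; apply: IH'; rewrite inE eqxx.
  - exact: (cp_refl hP).
  - by apply: (cp_trans hP) Pxb _; apply: IH'; rewrite inE hz orbT.
move: hz => /orP[/eqP ->|/orP[/eqP ->|hz]].
- by apply: IH'; rewrite inE eqxx.
- by case: (cp_total hP zx zb).
- by apply: IH'; rewrite inE hz orbT.
Qed.

Lemma best_Z P s : (forall z, z \in s -> Zs z) -> Zs (best P s).
Proof.
move=> zs; move: (best_mem P s); rewrite inE => /orP[/eqP ->|/zs //].
exact: Z00.
Qed.

Definition menu n := map e (iota 0 n).

Lemma menu_Z n z : z \in menu n -> Zs z.
Proof. by move=> /mapP[k _ ->]; apply: e_Z. Qed.

Definition Gm n (P : pref R) : R * R :=
  if pselect (exists k, (k < n)%N /\ e k = Fc P) then Fc P else best P (menu n).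

Lemma Gm_menu n P : Gm n P \in (0, 0) :: menu n.
Proof.
rewrite /Gm; case: pselect => [[k [kn ek]]|_] /=; last exact: best_mem.
by rewrite -ek inE; apply/orP; right; apply: map_f; rewrite mem_iota add0n kn.
Qed.

Lemma Gm_best n P : I P -> forall z, z \in (0, 0) :: menu n -> P (Gm n P) z.
Proof.
move=> IP z hz; rewrite /Gm; case: pselect => [_|_] /=; last first.
  by apply: best_max => //; [exact: clI | exact: menu_Z].
move: hz; rewrite inE => /orP[/eqP ->|/mapP[k _ ->]]; first exact: ir.
exact: best_e.
Qed.

Lemma Gm_Z n P : I P -> Zs (Gm n P).
Proof.
move=> IP; move: (Gm_menu n P); rewrite inE => /orP[/eqP ->|/menu_Z //].
exact: Z00.
Qed.

Lemma Gm_adm n : admissible_finite D Rl Rh (Gm n).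
Proof.
split.
- by move=> P IP; apply: Gm_Z.
- by move=> P P' IP IP'; apply: Gm_best => //; apply: Gm_menu.
- by move=> P IP; apply: Gm_best => //; rewrite inE eqxx.
- apply: (@sub_finite_set _ _ [set` ((0, 0) :: menu n)]); last exact: finite_seq.
  by move=> z [P _ <-]; apply: Gm_menu.
Qed.

Lemma Gm_K n P : K n P -> Gm n P = Fc P.
Proof.
move=> [k kn TP]; rewrite /Gm; case: pselect => // -[]; exists k; split => //.
exact: esym (Tx_Fc TP).
Qed.

Lemma Gm_bound n P : I P -> (Gm n P).1 <= \sum_(z <- (0, 0) :: menu n) `|z.1|.
Proof.
move=> _; move: (Gm_menu n P); elim: ((0, 0) :: menu n) => [//|x s IH].
rewrite inE big_cons => /orP[/eqP ->|h].
  apply: le_trans (ler_norm _) _; rewrite lerDl.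
  by apply: sumr_ge0 => i _; apply: normr_ge0.
apply: le_trans (IH h) _; rewrite lerDr; exact: normr_ge0.
Qed.


Lemma inner_mono (A : set T) (f g : T -> \bar R) :
  (forall x, A x -> (0 <= f x)%E) -> (forall x, A x -> (f x <= g x)%E) ->
  (\int[mu]_(x in A) f x <= \int[mu]_(x in A) g x)%E.
Proof.
move=> f0 fg.
have g0 : forall x, A x -> (0 <= g x)%E by move=> x Ax; apply: le_trans (f0 x Ax) (fg x Ax).
rewrite (ge0_integralE _ f0) (ge0_integralE _ g0).
apply: ereal_sup_le => _ [h hf <-]; exists h => // x.
apply: le_trans (hf x) _; rewrite /patch; case: ifP => // /[!inE] Ax.
exact: fg.
Qed.

Lemma sum_norm_ge (s : seq R) z : z \in s -> z <= \sum_(w <- s) `|w|.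
Proof.
elim: s => [//|x s IH]; rewrite inE big_cons => /orP[/eqP ->|h].
  apply: le_trans (ler_norm _) _; rewrite lerDl.
  by apply: sumr_ge0 => i _; apply: normr_ge0.
apply: le_trans (IH h) _; rewrite lerDr; exact: normr_ge0.
Qed.

Lemma delta_bd (B eps : R) : 0 <= B -> 0 < eps -> B * (eps / (2 * (B + 1))) <= eps / 2.
Proof.
move=> B0 e0.
have h : eps / (2 * (B + 1)) * (2 * (B + 1)) = eps.
  by rewrite mulfVK // mulf_neq0 // gt_eqF // ltr_wpDl.
have d0 : 0 < eps / (2 * (B + 1)) by rewrite divr_gt0 // mulr_gt0 // ltr_wpDl.
nra.
Qed.

Lemma small_K (d : R) : 0 < d -> exists n, (mu (I `\` K n) < d%:E)%E.
Proof.
move=> d0.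
pose F n : set T := I `\` K n.
have mF : forall n, measurable (F n).
  by move=> n; apply: measurableD; [exact: meas_I | exact: K_meas].
have F0 : (mu (F 0%N) < +oo)%E.
  apply: (le_lt_trans (y := mu I)); last by case: hmu => _ ->; rewrite ltry.
  by apply: le_measure; [rewrite inE; exact: mF | rewrite inE; exact: meas_I | move=> P []].
have capF : \bigcap_n F n = Nset.
  apply/seteqP; split => P.
    move=> HF; have [IP _] := HF 0%N Logic.I; split => //.
    move=> [k _ Tk]; have [_ nK] := HF k.+1 Logic.I; apply: nK.
    by exists k => //=; rewrite ltnSn.
  move=> [IP nT] n _; split => // -[k _ Tk]; apply: nT; by exists k.
have mon : {homo F : n m / (n <= m)%N >-> (m <= n)%O}.
  move=> n m nm; apply/subsetPset => P [IP nK]; split => // -[k kn Tk]; apply: nK.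
  by exists k => //=; apply: leq_trans kn nm.
have cv := nonincreasing_cvg_mu F0 mF (ltac:(rewrite capF; exact: Nset_meas)) mon.
rewrite capF Nset_null in cv.
apply: contrapT => H.
have H' : forall n, (d%:E <= mu (F n))%E.
  by move=> n; rewrite leNgt; apply/negP => h; apply: H; exists n.
have : (d%:E <= limn (mu \o F))%E.
  by apply: lime_ge; [by apply/cvg_ex; exists 0%E | apply: nearW => n; exact: H'].
by rewrite (cvg_lim _ cv) // lee_fin leNgt d0.
Qed.

Lemma approx (eps : R) : 0 < eps -> 0 < revenue mu Fc ->
  exists n, revenue mu Fc - revenue mu (Gm n) <= eps.
Proof.
move=> e0 r0.
pose f : T -> \bar R := fun P => ((Fc P).1)%:E.
have f0 : forall P : T, I P -> (0 <= f P)%E.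
  by move=> P IP; rewrite lee_fin; have [] := (ZsE _).1 (mech IP).
set V := (\int[mu]_(x in I) f x)%E.
have rV : revenue mu Fc = fine V by [].
have V0 : (0 <= V)%E by apply: integral_ge0.
have Vfin : V \is a fin_num.
  rewrite ge0_fin_numE // ltNge; apply/negP => Vinf.
  have VV : V = +oo%E by apply/eqP; rewrite eq_le leey Vinf.
  by move: r0; rewrite rV VV /= ltxx.
set r := fine V.
have Vr : V = r%:E by rewrite fineK.
have : ((r - eps / 2)%:E < V)%E.
  by rewrite Vr lte_fin ltrBlDr ltrDl divr_gt0.
rewrite /V (ge0_integralE _ f0) => /ereal_sup_gt [_ [h hf <-]] ry.
have h0 : forall x : T, ~ I x -> h x = 0.
  move=> x nIx; have := hf x; rewrite /patch; case: ifP => [/[!inE]//|_].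
  by rewrite lee_fin => hx; apply/eqP; rewrite eq_le hx /=; apply: fun_ge0.
have hI : (\int[mu]_(x in I) (h x)%:E)%E = sintegral mu h.
  rewrite integral_nnsfun; last exact: meas_I.
  congr sintegral; apply/funext => x; rewrite /patch; case: ifP => // /negbT; rewrite notin_setE => nIx.
  by rewrite h0.
have [X hX] := (finite_fsetP (T := R)).1 (fimfunP h).
set B := \sum_(w <- finmap.enum_fset X) `|w|.
have B0 : 0 <= B by apply: sumr_ge0 => i _; apply: normr_ge0.
have hB : forall x : T, h x <= B.
  move=> x; apply: sum_norm_ge.
  have : range h (h x) by exists x.
  by rewrite hX.
set d := eps / (2 * (B + 1)).
have d0 : 0 < d by rewrite divr_gt0 // mulr_gt0 // ltr_wpDl.
have [n Kn] := small_K d0.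
set g : T -> \bar R := fun P => ((Gm n P).1)%:E.
set Gi := (\int[mu]_(x in I) g x)%E.
have rG : revenue mu (Gm n) = fine Gi by [].
have g0 : forall P : T, I P -> (0 <= g P)%E.
  by move=> P IP; rewrite lee_fin; have [] := (ZsE _).1 (Gm_Z n IP).
set Bm := \sum_(z <- (0, 0) :: menu n) `|z.1|.
have Gi0 : (0 <= Gi)%E by apply: integral_ge0.
have GiB : (Gi <= Bm%:E)%E.
  apply: (le_trans (y := (\int[mu]_(x in I) (cst Bm%:E) x)%E)).
    apply: inner_mono => // P IP; rewrite lee_fin; exact: Gm_bound.
  by rewrite integral_cst; [case: hmu => _ ->; rewrite mule1 | exact: meas_I].
have Gfin : Gi \is a fin_num by rewrite ge0_fin_numE // (le_lt_trans GiB) // ltry.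
have mK := K_meas n.
have mIK : measurable (I `\` K n : set T) by apply: measurableD; [exact: meas_I | exact: mK].
have U : K n `|` (I `\` K n) = I :> set T.
  apply/seteqP; split => P; first by case=> [/K_I|[]].
  by move=> IP; case: (pselect (K n P)) => kP; [left | right].
have split_h : (\int[mu]_(x in I) (h x)%:E)%E =
    (\int[mu]_(x in K n) (h x)%:E + \int[mu]_(x in I `\` K n) (h x)%:E)%E.
  rewrite -{1}U; apply: ge0_integral_setU => //.
  - by apply/measurable_realfun.measurable_EFinP; apply: measurable_funP.
  - by move=> x _; rewrite lee_fin.
  - by apply/disj_setPS => P [KP [_ nKP]].
have ij_le : (\int[mu]_(x in I `\` K n) (h x)%:E <= (B * d)%:E)%E.
  apply: (le_trans (y := (\int[mu]_(x in I `\` K n) (cst B%:E) x)%E)).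
    apply: ge0_le_integral => //.
    - by move=> x _; rewrite lee_fin.
    - by apply/measurable_realfun.measurable_EFinP; apply: measurable_funP.
    - by move=> x _; rewrite lee_fin.
  rewrite integral_cst //.
  have mf0 : (0 <= mu (I `\` K n))%E by apply: measure_ge0.
  have mfin : mu (I `\` K n) \is a fin_num by rewrite ge0_fin_numE // (lt_le_trans Kn) // leey.
  rewrite -(fineK mfin) -EFinM lee_fin ler_wpM2l //.
  by rewrite -lee_fin fineK // ltW.
have ik_le : (\int[mu]_(x in K n) (h x)%:E <= Gi)%E.
  have -> : K n = I `&` K n by apply/seteqP; split => [P KP|P []//]; split => //; case: KP => k _ [].
  rewrite integral_mkcondr; apply: inner_mono.
    by move=> x _; rewrite /patch; case: ifP => _ //; rewrite lee_fin.
  move=> P IP; rewrite /patch; case: ifP => [/[!inE] KP|_]; last exact: g0.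
  rewrite /g Gm_K //; have := hf P; rewrite /patch; case: ifP => //.
  by move=> /negbT; rewrite notin_setE => /(_ IP).
have ik0 : (0 <= \int[mu]_(x in K n) (h x)%:E)%E by apply: integral_ge0 => x _; rewrite lee_fin.
have ij0 : (0 <= \int[mu]_(x in I `\` K n) (h x)%:E)%E by apply: integral_ge0 => x _; rewrite lee_fin.
have ikfin : (\int[mu]_(x in K n) (h x)%:E)%E \is a fin_num.
  by rewrite ge0_fin_numE // (le_lt_trans ik_le) // -ge0_fin_numE.
have ijfin : (\int[mu]_(x in I `\` K n) (h x)%:E)%E \is a fin_num.
  by rewrite ge0_fin_numE // (le_lt_trans ij_le) // ltry.
move: ry ij_le ik_le; rewrite -hI split_h -(fineK ikfin) -(fineK ijfin) -(fineK Gfin).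
rewrite -EFinD lte_fin !lee_fin => ry ij ik.
exists n; rewrite rV rG -/r.
have := delta_bd B0 e0; rewrite -/d => bd.
lra.
Qed.

End Main.

Unset Implicit Arguments.
Set Strict Implicit.

Theorem mainTheorem15 (R : realType) (D : set (pref R)) (Rl Rh : pref R)
  (mu : {measure set (borelI D Rl Rh) -> \bar R}) (Fc : pref R -> R * R) :
  rich_single_crossing D -> D Rl -> D Rh -> preceqP Rl Rh ->
  probability_on mu -> nontrivial mu -> continuous_measure mu ->
  mechanism D Rl Rh Fc -> strategy_proof D Rl Rh Fc ->
  individually_rational D Rl Rh Fc ->
  countable (mrange D Rl Rh Fc) -> closed (mrange D Rl Rh Fc) ->
  finite_set (limit_point (mrange D Rl Rh Fc)) ->
  (forall F, admissible_finite D Rl Rh F -> revenue mu F < revenue mu Fc) ->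
  (forall eps : R, 0 < eps -> exists Feps,
     admissible_finite D Rl Rh Feps /\ revenue mu Fc - revenue mu Feps <= eps) /\
  (forall Fstar, admissible_finite D Rl Rh Fstar ->
     (forall F, admissible_finite D Rl Rh F -> revenue mu F <= revenue mu Fstar) ->
     revenue mu Fc <= revenue mu Fstar).
Proof.
move=> hD DRl DRh RlRh hmu ntr mcont mech sp ir cnt _ _ better.
set C := mrange D Rl Rh Fc.
have /pcard_surjP [g sg] := cnt.
pose e k : R * R := if pselect (C (g k)) then g k else (0, 0).
have eC : forall k, C (e k) \/ e k = (0, 0).
  by move=> k; rewrite /e; case: pselect => h /=; [left | right].
have eS : forall x, C x -> exists k, e k = x.
  move=> x Cx; have [k _ gk] := sg x Cx; exists k.
  by rewrite /e; case: pselect => //= -[]; rewrite gk.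
pose F0 : pref R -> R * R := fun _ => (0, 0).
have z00 : Zs ((0 : R), (0 : R)) by apply/ZsE => /=; rewrite lexx ler01.
have clI : forall P, Defs.interval D Rl Rh P -> classical_pref P.
  by move=> P IP; apply: (classD hD); case: IP.
have F0adm : admissible_finite D Rl Rh F0.
  split.
  - by move=> P _.
  - by move=> P P' IP _; apply: (cp_refl (clI P IP)).
  - by move=> P IP; apply: (cp_refl (clI P IP)).
  - apply: (@sub_finite_set _ _ [set` [:: ((0 : R), (0 : R))]]); last exact: finite_seq.
    by move=> z [P _ <-]; rewrite /F0 /= inE.
have rev0 : revenue mu F0 = 0.
  by rewrite /revenue /Rintegral integral0_eq.
have rpos : 0 < revenue mu Fc by rewrite -rev0; apply: better.
have part1 : forall eps : R, 0 < eps -> exists Feps,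
     admissible_finite D Rl Rh Feps /\ revenue mu Fc - revenue mu Feps <= eps.
  move=> eps e0.
  have [n hn] := approx hD hmu mcont mech sp eC eS e0 rpos.
  exists (Gm Fc e n); split => //.
  exact: (Gm_adm hD mech sp ir eC).
split => // Fstar adm opt.
rewrite leNgt; apply/negP => lt.
have e0 : 0 < (revenue mu Fc - revenue mu Fstar) / 2 by rewrite divr_gt0 // subr_gt0.
have [Feps [aF hF]] := part1 _ e0.
have := opt Feps aF.
move: hF lt; set a := revenue mu Fc; set b := revenue mu Fstar; set c := revenue mu Feps.
move=> *; lra.
Qed.
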